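(* Let $\mathcal H,\mathcal K$ be Hopf algebras and $M,N$ left-left SAYD modules over $\mathcal H$ and $\mathcal K$. For each $n\ge0$ the map $$\Omega_n:(\mathcal H\otimes\mathcal K)^{\otimes n+1}\square_{\mathcal H\otimes\mathcal K}(M\otimes N)\to(\mathcal H^{\otimes n+1}\square_{\mathcal H}M)\otimes(\mathcal K^{\otimes n+1}\square_{\mathcal K}N),$$ $$(h_0\otimes k_0)\otimes\dots\otimes(h_n\otimes k_n)\otimes(m\otimes r)\mapsto(h_0\otimes\dots\otimes h_n\otimes m)\otimes(k_0\otimes\dots\otimes k_n\otimes r),$$ defines an isomorphism of cyclic modules $\widetilde C(\mathcal H\otimes\mathcal K,M\otimes N)\cong\widetilde C(\mathcal H,M)\times\widetilde C(\mathcal K,N)$.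
   Context: Hopf algebras over a field of characteristic zero with bijective antipode. A left-left SAYD module is a left module and left comodule satisfying the anti-Yetter–Drinfeld compatibility and stability conditions; $M\otimes N$ is one over $\mathcal H\otimes\mathcal K$ componentwise. $X\square_{\mathcal H}Y=\ker(\Delta_X\otimes id-id\otimes{}_Y\Delta)$ is the cotensor product of a right comodule $X$ and left comodule $Y$. The cyclic module $\widetilde C(\mathcal H,M)$ has $\widetilde C_n=\mathcal H^{\otimes n+1}\square_{\mathcal H}M$ with faces $\delta_i(h_0\otimes\dots\otimes h_n\otimes m)=h_0\otimes\dots\otimes h_ih_{i+1}\otimes\dots\otimes h_n\otimes m$ ($0\le i<n$), $\delta_n(h_0\otimes\dots\otimes h_n\otimes m)=h_n^{(1)}h_0\otimes h_1\otimes\dots\otimes h_{n-1}\otimes h_n^{(2)}m$, degeneracies $\sigma_i$ inserting $1$ after slot $i$, and cyclic operator $\tau_n(h_0\otimes\dots\otimes h_n\otimes m)=h_n^{(1)}\otimes h_0\otimes\dots\otimes h_{n-1}\otimes h_n^{(2)}m$. The diagonal $C\times C'$ of cyclic modules has $(C\times C')_n=C_n\otimes C'_n$ with componentwise structure maps. *)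

(* Defs.v *)
From HB Require Import structures.
From mathcomp Require Import all_boot all_order all_algebra.
Unset Printing Implicit Defensive.
Import GRing.Theory.
Local Open Scope ring_scope.

Section Lin.
Variable F : fieldType.

Definition lin {V W : lmodType F} (f : V -> W) : Prop :=
  forall (a : F) (u v : V), f (a *: u + v) = a *: f u + f v.

Definition bilin {V W U : lmodType F} (f : V -> W -> U) : Prop :=
  (forall w, lin (fun v => f v w)) /\ (forall v, lin (f v)).

(* A tensor product of V and W over F, given by its universal property:
   a space tsp with a bilinear map tpure : V -> W -> tsp such that every
   bilinear map V -> W -> U factors uniquely through a linear map. *)
Record tensor (V W : lmodType F) := Tensor {
  tsp : lmodType F;
  tpure : V -> W -> tsp;
  tlift : forall U : lmodType F, (V -> W -> U) -> tsp -> U;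
  tpure_bilin : bilin tpure;
  tlift_lin : forall (U : lmodType F) (f : V -> W -> U), bilin f -> lin (tlift U f);
  tlift_pure : forall (U : lmodType F) (f : V -> W -> U), bilin f ->
     forall v w, tlift U f (tpure v w) = f v w;
  tlift_uniq : forall (U : lmodType F) (f : V -> W -> U) (g : tsp -> U), lin g ->
     (forall v w, g (tpure v w) = f v w) -> forall t, g t = tlift U f t }.

Definition tensor_provider := forall V W : lmodType F, tensor V W.

End Lin.
Arguments lin {F V W}.
Arguments bilin {F V W U}.
Arguments tsp {F V W}.
Arguments tpure {F V W}.
Arguments tlift {F V W} _ {U}.

Section Tens.
Variable F : fieldType.
Variable tp : tensor_provider F.

Definition T (V W : lmodType F) : lmodType F := tsp (tp V W).
Definition tm {V W : lmodType F} (v : V) (w : W) : T V W := tpure (tp V W) v w.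
Definition lift {V W U : lmodType F} (f : V -> W -> U) (t : T V W) : U :=
  @tlift F V W (tp V W) U f t.

Definition tmap {V W V' W' : lmodType F} (f : V -> V') (g : W -> W')
  : T V W -> T V' W' := lift (fun v w => tm (f v) (g w)).

Definition tassoc {A B C : lmodType F} : T (T A B) C -> T A (T B C) :=
  lift (fun (x : T A B) (c : C) => lift (fun (a : A) (b : B) => tm a (tm b c)) x).

Record hopf_data (H : lmodType F) := HopfData {
  hmul : H -> H -> H;
  hone : H;
  hcomul : H -> T H H;
  hcounit : H -> F^o;
  hanti : H -> H }.
Arguments hmul {H}. Arguments hone {H}. Arguments hcomul {H}.
Arguments hcounit {H}. Arguments hanti {H}.

Definition tmul {H : lmodType F} (mul : H -> H -> H) (x y : T H H) : T H H :=
  lift (fun a b => lift (fun c d => tm (mul a c) (mul b d)) y) x.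

Definition is_hopf (H : lmodType F) (h : hopf_data H) : Prop :=
  let mul := hmul h in let one := hone h in let D := hcomul h in
  let e := hcounit h in let S := hanti h in
      bilin mul /\
      (forall a b c, mul (mul a b) c = mul a (mul b c)) /\
      (forall a, mul one a = a /\ mul a one = a) /\
      lin D /\ lin e /\
      (forall a, tassoc (tmap D id (D a)) = tmap id D (D a)) /\
      (forall a, lift (fun x y => e x *: y) (D a) = a /\
                 lift (fun x y => e y *: x) (D a) = a) /\
      (forall a b, D (mul a b) = tmul mul (D a) (D b)) /\ D one = tm one one /\
      (forall a b, e (mul a b) = e a * e b) /\ e one = 1 /\
      lin S /\ (forall a, lift (fun x y => mul (S x) y) (D a) = e a *: one /\
                          lift (fun x y => mul x (S y)) (D a) = e a *: one) /\
      bijective S.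

Record mod_data (H M : lmodType F) := ModData {
  mact : H -> M -> M;
  mcoact : M -> T H M }.
Arguments mact {H M}. Arguments mcoact {H M}.

Definition is_sayd (H M : lmodType F) (h : hopf_data H) (m : mod_data H M) : Prop :=
  let mul := hmul h in let one := hone h in let D := hcomul h in
  let e := hcounit h in let S := hanti h in
  let act := mact m in let co := mcoact m in
      bilin act /\ (forall x, act one x = x) /\
      (forall a b x, act (mul a b) x = act a (act b x)) /\
      lin co /\ (forall x, tassoc (tmap D id (co x)) = tmap id co (co x)) /\
      (forall x, lift (fun a y => e a *: y) (co x) = x) /\
      (* anti-Yetter-Drinfeld: (a x)<-1> (x) (a x)<0> =
         a(1) x<-1> S(a(3)) (x) a(2) x<0> *)
      (forall a x, co (act a x) =
         lift (fun a1 a23 => lift (fun a2 a3 =>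
           lift (fun x1 x0 => tm (mul (mul a1 x1) (S a3)) (act a2 x0)) (co x))
           (D a23)) (D a)) /\
      (forall x, lift (fun a y => act a y) (co x) = x).

Definition hopf_tensor (H K : lmodType F) (h : hopf_data H) (k : hopf_data K)
  : hopf_data (T H K) :=
  @HopfData (T H K)
    (fun x y => lift (fun a b => lift (fun c d => tm (hmul h a c) (hmul k b d)) y) x)
    (tm (hone h) (hone k))
    (lift (fun a b => lift (fun a1 a2 => lift (fun b1 b2 =>
        tm (tm a1 b1) (tm a2 b2)) (hcomul k b)) (hcomul h a)))
    (lift (fun a b => (hcounit h a * hcounit k b : F^o)))
    (tmap (hanti h) (hanti k)).

Definition mod_tensor (H K M N : lmodType F) (m : mod_data H M) (n : mod_data K N)
  : mod_data (T H K) (T M N) :=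
  @ModData (T H K) (T M N)
    (fun t x => lift (fun a b => lift (fun y z => tm (mact m a y) (mact n b z)) x) t)
    (lift (fun y z => lift (fun a y0 => lift (fun b z0 =>
        tm (tm a b) (tm y0 z0)) (mcoact n z)) (mcoact m y))).

(* H^{(x) n+1} is realised left-nested: ((h0 (x) h1) (x) ...) (x) hn.   *)
Section Cyclic.
Variables (H M : lmodType F) (h : hopf_data H) (md : mod_data H M).
Local Notation mul := (hmul h).
Local Notation one := (hone h).
Local Notation D := (hcomul h).
Local Notation act := (mact md).
Local Notation co := (mcoact md).

Fixpoint tpow (n : nat) : lmodType F :=
  match n with 0 => H | m.+1 => T (tpow m) H end.

Definition Camb (n : nat) : lmodType F := T (tpow n) M.

(* right diagonal H-coaction on H^{(x) n+1}:
   h0..hn |-> h0(1) .. hn(1) (x) h0(2) ... hn(2) *)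
Fixpoint rcoact (n : nat) : tpow n -> T (tpow n) H :=
  match n return tpow n -> T (tpow n) H with
  | 0 => D
  | m.+1 => fun x : T (tpow m) H =>
      lift (fun (y : tpow m) (a : H) =>
        lift (fun (y0 : tpow m) (y1 : H) =>
          lift (fun a1 a2 => (tm (tm y0 a1 : tpow m.+1) (mul y1 a2) : T (tpow m.+1) H))
            (D a)) (rcoact m y)) x
  end.

(* the cotensor product H^{(x) n+1} []_H M, as a predicate on the ambient *)
Definition cotensor (n : nat) (c : Camb n) : Prop :=
  tassoc (tmap (rcoact n) id c) = tmap id co c.

(* h0 .. hn  |->  h0 .. hi h(i+1) .. hn  (on H^{(x) n+2}) *)
Fixpoint face_pow (i n : nat) : tpow n.+1 -> tpow n :=
  match n return tpow n.+1 -> tpow n with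
  | 0 => fun x : T H H => lift mul x
  | m.+1 => fun x : T (tpow m.+1) H =>
      if i == m.+1 then
        lift (fun (y : tpow m.+1) (a : H) =>
          lift (fun (z : tpow m) (g : H) => (tm z (mul g a) : tpow m.+1)) y) x
      else lift (fun (y : tpow m.+1) (a : H) => (tm (face_pow i m y) a : tpow m.+1)) x
  end.

(* insert 1 after slot i *)
Fixpoint degen_pow (i n : nat) : tpow n -> tpow n.+1 :=
  match n return tpow n -> tpow n.+1 with
  | 0 => fun x : H => (tm x one : tpow 1)
  | m.+1 => fun x : T (tpow m) H =>
      if i == m.+1 then (tm x one : tpow m.+2)
      else lift (fun (y : tpow m) (a : H) => (tm (degen_pow i m y) a : tpow m.+2)) x
  end.

Fixpoint prepend (g : H) (n : nat) : tpow n -> tpow n.+1 :=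
  match n return tpow n -> tpow n.+1 with
  | 0 => fun x : H => (tm g x : tpow 1)
  | m.+1 => fun x : T (tpow m) H =>
      lift (fun (y : tpow m) (a : H) => (tm (prepend g m y) a : tpow m.+2)) x
  end.

Fixpoint mulfront (g : H) (n : nat) : tpow n -> tpow n :=
  match n return tpow n -> tpow n with
  | 0 => fun x : H => mul g x
  | m.+1 => fun x : T (tpow m) H =>
      lift (fun (y : tpow m) (a : H) => (tm (mulfront g m y) a : tpow m.+1)) x
  end.

Definition face (i n : nat) : Camb n.+1 -> Camb n :=
  if i == n.+1 then
    (* delta_{n+1}(h0..h(n+1) (x) x) = h(n+1)(1) h0 .. hn (x) h(n+1)(2) x *)
    lift (fun (yh : T (tpow n) H) (x : M) =>
      lift (fun (y : tpow n) (a : H) =>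
        lift (fun a1 a2 => (tm (mulfront a1 n y) (act a2 x) : Camb n)) (D a)) yh)
  else lift (fun (y : tpow n.+1) (x : M) => (tm (face_pow i n y) x : Camb n)).

Definition degen (i n : nat) : Camb n -> Camb n.+1 :=
  lift (fun (y : tpow n) (x : M) => (tm (degen_pow i n y) x : Camb n.+1)).

(* cyclic operator tau_n :
   h0..hn (x) x |-> hn(1) (x) h0 .. h(n-1) (x) hn(2) x *)
Definition cyc (n : nat) : Camb n -> Camb n :=
  match n return Camb n -> Camb n with
  | 0 => lift (fun (a : H) (x : M) =>
           lift (fun a1 a2 => (tm a1 (act a2 x) : Camb 0)) (D a))
  | m.+1 => lift (fun (yh : T (tpow m) H) (x : M) =>
      lift (fun (y : tpow m) (a : H) =>
        lift (fun a1 a2 => (tm (prepend a1 m y) (act a2 x) : Camb m.+1)) (D a)) yh)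
  end.

End Cyclic.

Section Omega.
Variables (H K M N : lmodType F).

Fixpoint omega_pow (n : nat) : tpow (T H K) n -> T (tpow H n) (tpow K n) :=
  match n return tpow (T H K) n -> T (tpow H n) (tpow K n) with
  | 0 => fun x => x
  | m.+1 => fun x : T (tpow (T H K) m) (T H K) =>
      lift (fun (y : tpow (T H K) m) (hk : T H K) =>
        lift (fun (a : tpow H m) (b : tpow K m) =>
          lift (fun (u : H) (v : K) =>
            (tm (tm a u : tpow H m.+1) (tm b v : tpow K m.+1)
               : T (tpow H m.+1) (tpow K m.+1))) hk)
          (omega_pow m y)) x
  end.

Definition Omega (n : nat) :
  Camb (T H K) (T M N) n -> T (Camb H M n) (Camb K N n) :=
  lift (fun (x : tpow (T H K) n) (mn : T M N) =>
    lift (fun (a : tpow H n) (b : tpow K n) =>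
      lift (fun (y : M) (z : N) =>
        (tm (tm a y : Camb H M n) (tm b z : Camb K N n)
           : T (Camb H M n) (Camb K N n))) mn) (omega_pow n x)).

End Omega.

(* The n-th space of the diagonal C~(H,M) x C~(K,N), i.e.
   (H^{n+1} []_H M) (x) (K^{n+1} []_K N), realised inside
   (H^{n+1} (x) M) (x) (K^{n+1} (x) N) as the span of pure tensors of
   cotensor elements (over a field this is the image of the injective
   map from the tensor product of the subspaces). *)
Definition in_diag (H K M N : lmodType F) (h : hopf_data H) (k : hopf_data K)
  (m : mod_data H M) (n' : mod_data K N) (n : nat)
  (t : T (Camb H M n) (Camb K N n)) : Prop :=
  exists s : seq (Camb H M n * Camb K N n),
    (forall p, p \in s -> cotensor H M h m n p.1 /\ cotensor K N k n' n p.2) /\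
    t = \sum_(p <- s) tm p.1 p.2.

End Tens.

(* Main.v *)
Require Import Defs.
From HB Require Import structures.
From mathcomp Require Import all_boot all_order all_algebra.
From Stdlib Require Import FunctionalExtensionality.
Import GRing.Theory.
Local Open Scope ring_scope.

Create HintDb linDB.
Section Basic.
Context {F : fieldType} {tp : tensor_provider F}.
Local Notation T := (T F tp).
Local Notation tm := (tm F tp).
Local Notation lift := (Defs.lift F tp).

Lemma linD {V W : lmodType F} {f : V -> W} : lin f -> forall u v, f (u + v) = f u + f v.
Proof. by move=> L u v; have := L 1 u v; rewrite !scale1r. Qed.
Lemma lin0 {V W : lmodType F} {f : V -> W} : lin f -> f 0 = 0.
Proof. by move=> L; have := linD L 0 0; rewrite addr0 => E; apply: (addrI (f 0)); by rewrite addr0 -E. Qed.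
Lemma linZ {V W : lmodType F} {f : V -> W} : lin f -> forall a u, f (a *: u) = a *: f u.
Proof. by move=> L a u; rewrite -[a *: u]addr0 L lin0 // addr0. Qed.
Lemma linN {V W : lmodType F} {f : V -> W} : lin f -> forall u, f (- u) = - f u.
Proof. by move=> L u; rewrite -scaleN1r linZ // scaleN1r. Qed.
Lemma linB {V W : lmodType F} {f : V -> W} : lin f -> forall u v, f (u - v) = f u - f v.
Proof. by move=> L u v; rewrite linD // linN. Qed.
Lemma lin_sum {V W : lmodType F} {f : V -> W} (I : Type) (s : seq I) (g : I -> V) :
  lin f -> f (\sum_(i <- s) g i) = \sum_(i <- s) f (g i).
Proof.
move=> L; elim: s => [|x s IH]; first by rewrite !big_nil lin0.
by rewrite !big_cons linD // IH.
Qed.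

Lemma lift_tm {V W U : lmodType F} (f : V -> W -> U) v w :
  bilin f -> lift f (tm v w) = f v w.
Proof. by move=> B; rewrite /lift /tm tlift_pure. Qed.

Lemma lin_lift {V W U : lmodType F} (f : V -> W -> U) : bilin f -> lin (lift f).
Proof. by move=> B; apply: tlift_lin. Qed.

Lemma tm_bilin {V W : lmodType F} : bilin (tm : V -> W -> T V W).
Proof. exact: tpure_bilin. Qed.

Lemma lin_ext {V W U : lmodType F} {g1 g2 : T V W -> U} :
  lin g1 -> lin g2 -> (forall v w, g1 (tm v w) = g2 (tm v w)) -> forall t, g1 t = g2 t.
Proof.
move=> L1 L2 E t.
rewrite (@tlift_uniq _ _ _ (tp V W) U (fun v w => g1 (tm v w)) g1 L1) //.
by rewrite (@tlift_uniq _ _ _ (tp V W) U (fun v w => g1 (tm v w)) g2 L2) // => v w; rewrite E.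
Qed.


Lemma lin_idf {V : lmodType F} : lin (fun v : V => v).
Proof. by []. Qed.
Lemma lin_comp {V W U : lmodType F} {g : W -> U} {f : V -> W} :
  lin g -> lin f -> lin (fun v => g (f v)).
Proof. by move=> Lg Lf a u v; rewrite Lf Lg. Qed.
Lemma lin_bilL {V W U X : lmodType F} {g : W -> X -> U} {f : V -> W} {c} :
  bilin g -> lin f -> lin (fun v => g (f v) c).
Proof. by move=> [Bg _] Lf a u v; rewrite Lf Bg. Qed.
Lemma lin_bilR {V W U X : lmodType F} {g : X -> W -> U} {f : V -> W} {c} :
  bilin g -> lin f -> lin (fun v => g c (f v)).
Proof. by move=> [_ Bg] Lf a u v; rewrite Lf Bg. Qed.
Lemma lin_scaleL {V W : lmodType F} {f : V -> F^o} {c : W} :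
  lin f -> lin (fun v => (f v : F) *: c).
Proof. by move=> Lf a u v; rewrite Lf scalerDl scalerA. Qed.
Lemma lin_scaleR {V W : lmodType F} {f : V -> W} {c : F} :
  lin f -> lin (fun v => c *: f v).
Proof. by move=> Lf a u v; rewrite Lf scalerDr !scalerA mulrC. Qed.
Lemma lin_mulL {V : lmodType F} {f : V -> F^o} {c : F} :
  lin f -> lin (fun v => (f v * c : F^o)).
Proof. by move=> Lf a u v; rewrite Lf /= mulrDl -!mulrA. Qed.
Lemma lin_mulR {V : lmodType F} {f : V -> F^o} {c : F} :
  lin f -> lin (fun v => (c * f v : F^o)).
Proof.
move=> Lf a u v; rewrite Lf /=.
change (c * (a * f u + f v) = a * (c * f u) + c * f v).
by rewrite mulrDr mulrCA.
Qed.
Lemma lin_add {V W : lmodType F} {f g : V -> W} :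
  lin f -> lin g -> lin (fun v => f v + g v).
Proof.
move=> Lf Lg a u v; rewrite Lf Lg scalerDr.
by rewrite -!addrA; congr (_ + _); rewrite addrCA.
Qed.
Lemma lin_opp {V W : lmodType F} {f : V -> W} : lin f -> lin (fun v => - f v).
Proof. by move=> Lf a u v; rewrite Lf opprD scalerN. Qed.

Lemma bilin_comb {V W U : lmodType F} (f1 f2 : V -> W -> U) (a : F) :
  bilin f1 -> bilin f2 -> bilin (fun v w => a *: f1 v w + f2 v w).
Proof.
move=> [B1 B1'] [B2 B2']; split => x.
  by apply: lin_add; [apply: lin_scaleR|]; [apply: (B1 x)|apply: (B2 x)].
by apply: lin_add; [apply: lin_scaleR|]; [apply: (B1' x)|apply: (B2' x)].
Qed.

Lemma lift_comb {V W U : lmodType F} (f1 f2 : V -> W -> U) (a : F) t :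
  bilin f1 -> bilin f2 ->
  lift (fun v w => a *: f1 v w + f2 v w) t = a *: lift f1 t + lift f2 t.
Proof.
move=> B1 B2; apply: (lin_ext (g2 := fun t => a *: lift f1 t + lift f2 t)).
- exact/lin_lift/bilin_comb.
- by apply: lin_add; [apply: lin_scaleR|]; apply: lin_lift.
by move=> v w; rewrite !lift_tm //; exact: bilin_comb.
Qed.

Lemma lin_bil0 {V W U : lmodType F} {g : V -> W -> U} {c : V} :
  bilin g -> lin (g c).
Proof. by case=> _; apply. Qed.

Lemma lift_eq {V W U : lmodType F} (f1 f2 : V -> W -> U) t :
  (forall v w, f1 v w = f2 v w) -> lift f1 t = lift f2 t.
Proof.
move=> E; have -> // : f1 = f2.
by apply: functional_extensionality => v; apply: functional_extensionality => w.
Qed.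

Lemma lin_liftG {V W X U : lmodType F} {G : X -> V -> W -> U} {c} :
  (forall x, bilin (G x)) -> (forall v w, lin (fun x => G x v w)) ->
  lin (fun x => lift (G x) c).
Proof.
move=> BG LG a u v; rewrite -lift_comb //; apply: lift_eq => x y.
exact: LG.
Qed.

Lemma lin_liftC {V W X U : lmodType F} {G : V -> W -> U} {f : X -> T V W} :
  bilin G -> lin f -> lin (fun x => lift G (f x)).
Proof. by move=> B Lf; apply: lin_comp => //; apply: lin_lift. Qed.

Lemma bilin_comp {V W U X : lmodType F} (g : U -> X) (f : V -> W -> U) :
  lin g -> bilin f -> bilin (fun v w => g (f v w)).
Proof. by move=> Lg [B1 B2]; split=> x; apply: lin_comp. Qed.

Lemma comp_lift {V W U X : lmodType F} (g : U -> X) (f : V -> W -> U) t :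
  lin g -> bilin f -> g (lift f t) = lift (fun v w => g (f v w)) t.
Proof.
move=> Lg Bf; apply: (lin_ext (g1 := fun t => g (lift f t))).
- by apply: lin_comp => //; apply: lin_lift.
- by apply: lin_lift; apply: bilin_comp.
by move=> v w; rewrite !lift_tm //; apply: bilin_comp.
Qed.


Lemma tmap_E {V W V' W' : lmodType F} (f : V -> V') (g : W -> W') t :
  tmap F tp f g t = lift (fun v w => tm (f v) (g w)) t.
Proof. by []. Qed.

Lemma lin_tmap {V W V' W' : lmodType F} {f : V -> V'} {g : W -> W'} :
  lin f -> lin g -> lin (tmap F tp f g).
Proof. move=> Lf Lg; apply: lin_lift; split=> x; [apply: lin_bilL|apply: lin_bilR] => //; exact: tm_bilin. Qed.

Lemma tmap_tm {V W V' W' : lmodType F} (f : V -> V') (g : W -> W') v w :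
  lin f -> lin g -> tmap F tp f g (tm v w) = tm (f v) (g w).
Proof. move=> Lf Lg; rewrite tmap_E lift_tm //; split=> x; [apply: lin_bilL|apply: lin_bilR] => //; exact: tm_bilin. Qed.

Lemma tmap_lift {V W V' W' A B : lmodType F} (f : V -> V') (g : W -> W') (G : A -> B -> T V W) t :
  lin f -> lin g -> bilin G ->
  tmap F tp f g (lift G t) = lift (fun a b => tmap F tp f g (G a b)) t.
Proof. move=> Lf Lg BG; apply: comp_lift => //; exact: lin_tmap. Qed.

Lemma lift_lift {V W U A B : lmodType F} (f : V -> W -> U) (G : A -> B -> T V W) t :
  bilin f -> bilin G -> lift f (lift G t) = lift (fun a b => lift f (G a b)) t.
Proof. move=> Bf BG; apply: comp_lift => //; exact: lin_lift. Qed.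

Lemma tmZl {V W : lmodType F} (a : F) (v : V) (w : W) : tm (a *: v) w = a *: tm v w.
Proof. by case: (@tm_bilin V W) => [B _]; rewrite (linZ (B w)). Qed.
Lemma tmZr {V W : lmodType F} (a : F) (v : V) (w : W) : tm v (a *: w) = a *: tm v w.
Proof. by case: (@tm_bilin V W) => [_ B]; rewrite (linZ (B v)). Qed.
Lemma tmDl {V W : lmodType F} (u v : V) (w : W) : tm (u + v) w = tm u w + tm v w.
Proof. by case: (@tm_bilin V W) => [B _]; rewrite (linD (B w)). Qed.
Lemma tmDr {V W : lmodType F} (v : V) (u w : W) : tm v (u + w) = tm v u + tm v w.
Proof. by case: (@tm_bilin V W) => [_ B]; rewrite (linD (B v)). Qed.
Lemma tm_suml {V W : lmodType F} (I : Type) (r : seq I) (g : I -> V) (w : W) :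
  tm (\sum_(i <- r) g i) w = \sum_(i <- r) tm (g i) w.
Proof. by case: (@tm_bilin V W) => [B _]; rewrite (lin_sum _ _ _ (B w)). Qed.
Lemma tm_sumr {V W : lmodType F} (I : Type) (r : seq I) (g : I -> W) (v : V) :
  tm v (\sum_(i <- r) g i) = \sum_(i <- r) tm v (g i).
Proof. by case: (@tm_bilin V W) => [_ B]; rewrite (lin_sum _ _ _ (B v)). Qed.

Lemma tassoc_E {A B C : lmodType F} (t : T (T A B) C) :
  tassoc F tp t = lift (fun (x : T A B) (c : C) => lift (fun (a : A) (b : B) => tm a (tm b c)) x) t.
Proof. by []. Qed.

End Basic.


Ltac solve_lin :=
  match goal with
  | |- bilin (fun v w => _) =>
      let x := fresh "x" in split => x; solve_lin
  | |- bilin _ => first [ assumption | exact: tm_bilin | solve [eauto with linDB] ]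
  | |- lin (fun x => x) => exact: lin_idf
  | |- lin id => exact: lin_idf
  | |- lin (fun x => Defs.lift _ _ (@?G x) ?c) =>
      apply: (lin_liftG (G := G));
      [ let x := fresh "x" in intro x; simpl; solve_lin
      | let x := fresh "x" in let y := fresh "y" in intros x y; simpl; solve_lin ]
  | |- lin (fun x => Defs.lift _ _ ?G (@?f x)) =>
      apply: (lin_liftC (G := G) (f := f)); [ solve_lin | simpl; solve_lin ]
  | |- lin (fun x => (@?f x) *: ?c) => apply: (lin_scaleL (f := f)); simpl; solve_lin
  | |- lin (fun x => ?c *: (@?f x)) => apply: (lin_scaleR (f := f)); simpl; solve_lin
  | |- lin (fun x => (@?f x) + (@?g x)) => apply: (lin_add (f := f) (g := g)); simpl; solve_lin
  | |- lin (fun x => - (@?f x)) => apply: (lin_opp (f := f)); simpl; solve_lin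
  | |- lin (fun x => ?g (@?f x) ?c) =>
      apply: (lin_bilL (g := g) (f := f)); [ solve_lin | simpl; solve_lin ]
  | |- lin (fun x => ?g ?c (@?f x)) =>
      apply: (lin_bilR (g := g) (f := f)); [ solve_lin | simpl; solve_lin ]
  | |- lin (fun x => ?G (@?f x) ?n ?y) =>
      apply: (lin_comp (g := fun z => G z n y) (f := f)); [ solve [eauto with linDB] | simpl; solve_lin ]
  | |- lin (fun x => ?g (@?f x)) =>
      apply: (lin_comp (g := g) (f := f)); [ solve_lin | simpl; solve_lin ]
  | |- lin (Defs.lift _ _ _) => apply: lin_lift; solve_lin
  | |- lin (tmap _ _ _ _) => apply: lin_tmap; solve_lin
  | |- lin (?g ?c) => apply: (lin_bil0 (g := g)); solve_lin
  | |- lin _ => first [ assumption | solve [eauto with linDB] ]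
  end.


From Stdlib Require Import Setoid Morphisms.
#[export] Instance lift_proper {F : fieldType} {tp : tensor_provider F} {V W U : lmodType F} :
  Proper (pointwise_relation V (pointwise_relation W eq) ==> eq ==> eq) (@Defs.lift F tp V W U).
Proof. by move=> f g E t _ <-; apply: lift_eq. Qed.

Ltac lsimp := repeat (first [setoid_rewrite lift_tm | setoid_rewrite tmap_tm]; [idtac | solve_lin ..]).
Ltac lflat := repeat (setoid_rewrite lift_lift; [idtac | solve_lin ..]).
Ltac lsimp0 := repeat (rewrite lift_tm; last by solve_lin).
Ltac extv x := move: x; apply: lin_ext; [solve_lin | solve_lin | idtac].

Section Tass.
Context {F : fieldType} {tp : tensor_provider F}.
Lemma lin_tassoc {A B C : lmodType F} : lin (tassoc F tp : T F tp (T F tp A B) C -> T F tp A (T F tp B C)).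
Proof. rewrite /tassoc; apply: lin_lift; solve_lin. Qed.
End Tass.
#[export] Hint Resolve lin_tassoc : linDB.

Section Omega.
Context {F : fieldType} {tp : tensor_provider F}.
Variables (H K : lmodType F).
Local Notation T := (T F tp).
Local Notation tm := (tm F tp).
Local Notation lift := (Defs.lift F tp).
Local Notation tpow := (tpow F tp).
Local Notation op := (omega_pow F tp H K).

Lemma op_S m x : op m.+1 x = lift (fun (y : tpow (T H K) m) (hk : T H K) =>
        lift (fun (a : tpow H m) (b : tpow K m) =>
          lift (fun (u : H) (v : K) =>
            (tm (tm a u : tpow H m.+1) (tm b v : tpow K m.+1))) hk)
          (op m y)) x.
Proof. by []. Qed.

Lemma op_0 x : op 0 x = x. Proof. by []. Qed.

Lemma lin_op n : lin (op n).
Proof.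
elim: n => [|n IH]; first exact: lin_idf.
have -> : op n.+1 = lift (fun (y : tpow (T H K) n) (hk : T H K) =>
        lift (fun (a : tpow H n) (b : tpow K n) =>
          lift (fun (u : H) (v : K) =>
            (tm (tm a u : tpow H n.+1) (tm b v : tpow K n.+1))) hk)
          (op n y)) by [].
solve_lin.
Qed.

Fixpoint omega_inv (n : nat) : T (tpow H n) (tpow K n) -> tpow (T H K) n :=
  match n return T (tpow H n) (tpow K n) -> tpow (T H K) n with
  | 0 => fun x => x
  | m.+1 => fun x : T (T (tpow H m) H) (T (tpow K m) K) =>
     lift (fun (a : T (tpow H m) H) (b : T (tpow K m) K) =>
       lift (fun (a' : tpow H m) (u : H) => lift (fun (b' : tpow K m) (v : K) =>
         (tm (omega_inv m (tm a' b')) (tm u v) : tpow (T H K) m.+1)) b) a) x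
  end.
Local Notation oi := omega_inv.

Lemma oi_S m x : oi m.+1 x =
     lift (fun (a : T (tpow H m) H) (b : T (tpow K m) K) =>
       lift (fun (a' : tpow H m) (u : H) => lift (fun (b' : tpow K m) (v : K) =>
         (tm (oi m (tm a' b')) (tm u v) : tpow (T H K) m.+1)) b) a) x.
Proof. by []. Qed.

Lemma oi_0 x : oi 0 x = x. Proof. by []. Qed.

Lemma lin_oi n : lin (oi n).
Proof.
elim: n => [|n IH]; first exact: lin_idf.
have -> : oi n.+1 = lift (fun (a : T (tpow H n) H) (b : T (tpow K n) K) =>
       lift (fun (a' : tpow H n) (u : H) => lift (fun (b' : tpow K n) (v : K) =>
         (tm (oi n (tm a' b')) (tm u v) : tpow (T H K) n.+1)) b) a) by [].
solve_lin.
Qed.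

End Omega.
#[export] Hint Resolve lin_op lin_oi : linDB.
#[export] Hint Extern 1 (lin (omega_pow _ _ _ _ ?n)) => exact (lin_op _ _ n) : linDB.
#[export] Hint Extern 1 (lin (omega_inv _ _ ?n)) => exact (lin_oi _ _ n) : linDB.

#[global] Typeclasses Opaque omega_pow omega_inv.
Opaque omega_pow omega_inv.
Section Omega2.
Context {F : fieldType} {tp : tensor_provider F}.
Variables (H K : lmodType F).
Local Notation T := (T F tp).
Local Notation tm := (tm F tp).
Local Notation lift := (Defs.lift F tp).
Local Notation tpow := (tpow F tp).
Local Notation op := (omega_pow F tp H K).
Local Notation oi := (omega_inv H K).

Lemma oi_op n y : oi n (op n y) = y.
Proof.
elim: n y => [//|n IH] y.
extv y; move=> y' hk; extv hk; move=> u v.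
rewrite -[in RHS](IH y') op_S; lsimp.
move: (op n y') => z; extv z; move=> a b.
by rewrite oi_S; lsimp.
Qed.

Lemma op_oi n t : op n (oi n t) = t.
Proof.
elim: n t => [//|n IH] t.
extv t; move=> a b; extv a; move=> a' u; extv b; move=> b' v.
rewrite oi_S; lsimp.
by rewrite op_S; lsimp; rewrite IH; lsimp.
Qed.
End Omega2.

Section Gen.
Context {F : fieldType} {tp : tensor_provider F}.
Variables (X Y : lmodType F) (hx : hopf_data F tp X) (md : mod_data F tp X Y).
Local Notation T := (T F tp).
Local Notation tm := (tm F tp).
Local Notation lift := (Defs.lift F tp).
Local Notation tpow := (tpow F tp X).
Local Notation mul := (@hmul F tp X hx).
Local Notation one := (@hone F tp X hx).
Local Notation D := (@hcomul F tp X hx).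
Local Notation act := (@mact F tp X Y md).
Local Notation rc := (rcoact F tp X hx).
Local Notation fp := (face_pow F tp X hx).
Local Notation dp := (degen_pow F tp X hx).
Local Notation pr := (prepend F tp X).
Local Notation mf := (mulfront F tp X hx).

Lemma rc_0 x : rc 0 x = D x. Proof. by []. Qed.
Lemma rc_S n x : rc n.+1 x = lift (fun (y : tpow n) (a : X) =>
        lift (fun (y0 : tpow n) (y1 : X) =>
          lift (fun a1 a2 => (tm (tm y0 a1 : tpow n.+1) (mul y1 a2) : T (tpow n.+1) X))
            (D a)) (rc n y)) x.
Proof. by []. Qed.
Lemma fp_0 i x : fp i 0 x = lift mul x. Proof. by []. Qed.
Lemma fp_S i n x : fp i n.+1 x =
  if i == n.+1 then
        lift (fun (y : tpow n.+1) (a : X) =>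
          lift (fun (z : tpow n) (g : X) => (tm z (mul g a) : tpow n.+1)) y) x
      else lift (fun (y : tpow n.+1) (a : X) => (tm (fp i n y) a : tpow n.+1)) x.
Proof. by []. Qed.
Lemma dp_0 i x : dp i 0 x = tm x one. Proof. by []. Qed.
Lemma dp_S i n x : dp i n.+1 x =
      if i == n.+1 then (tm x one : tpow n.+2)
      else lift (fun (y : tpow n) (a : X) => (tm (dp i n y) a : tpow n.+2)) x.
Proof. by []. Qed.
Lemma pr_0 g x : pr g 0 x = tm g x. Proof. by []. Qed.
Lemma pr_S g n x : pr g n.+1 x =
  lift (fun (y : tpow n) (a : X) => (tm (pr g n y) a : tpow n.+2)) x.
Proof. by []. Qed.
Lemma mf_0 g x : mf g 0 x = mul g x. Proof. by []. Qed.
Lemma mf_S g n x : mf g n.+1 x =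
  lift (fun (y : tpow n) (a : X) => (tm (mf g n y) a : tpow n.+1)) x.
Proof. by []. Qed.

Hypotheses (Bm : bilin mul) (LD : lin D) (Ba : bilin act) (Lc : lin (@mcoact F tp X Y md)).

Lemma lin_rc n : lin (rc n).
Proof.
elim: n => [|n IH] //.
have -> : rc n.+1 = lift (fun (y : tpow n) (a : X) =>
        lift (fun (y0 : tpow n) (y1 : X) =>
          lift (fun a1 a2 => (tm (tm y0 a1 : tpow n.+1) (mul y1 a2) : T (tpow n.+1) X))
            (D a)) (rc n y)) by [].
solve_lin.
Qed.

Lemma lin_fp i n : lin (fp i n).
Proof.
elim: n => [|n IH]; first by apply: lin_lift.
move=> a u v; rewrite !fp_S; case: ifP => _; revert a u v; apply: lin_lift; solve_lin.
Qed.

Lemma lin_dp i n : lin (dp i n).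
Proof.
elim: n => [|n IH].
  have -> : dp i 0 = fun x => tm x one by []. solve_lin.
move=> a u v; rewrite !dp_S; case: ifP => _; revert a u v.
  have L : lin (fun x : tpow n.+1 => (tm x one : tpow n.+2)) by solve_lin.
  exact: L.
apply: lin_lift; solve_lin.
Qed.

Lemma lin_pr g n : lin (pr g n).
Proof.
elim: n => [|n IH].
  have -> : pr g 0 = fun x => tm g x by []. solve_lin.
have -> : pr g n.+1 = lift (fun (y : tpow n) (a : X) => (tm (pr g n y) a : tpow n.+2)) by [].
solve_lin.
Qed.

Lemma lin_mf g n : lin (mf g n).
Proof.
elim: n => [|n IH].
  have -> : mf g 0 = fun x => mul g x by []. solve_lin.
have -> : mf g n.+1 = lift (fun (y : tpow n) (a : X) => (tm (mf g n y) a : tpow n.+1)) by [].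
solve_lin.
Qed.


#[local] Hint Resolve lin_rc lin_fp lin_dp lin_pr lin_mf : linDB.
Lemma lin_pr_g n y : lin (fun g => pr g n y).
Proof.
elim: n y => [|n IH] y; first by rewrite /=; solve_lin.
have -> : (fun g => pr g n.+1 y) = (fun g => lift (fun (y : tpow n) (a : X) => (tm (pr g n y) a : tpow n.+2)) y) by [].
solve_lin.
Qed.

Lemma lin_mf_g n y : lin (fun g => mf g n y).
Proof.
elim: n y => [|n IH] y; first by rewrite /=; solve_lin.
have -> : (fun g => mf g n.+1 y) = (fun g => lift (fun (y : tpow n) (a : X) => (tm (mf g n y) a : tpow n.+1)) y) by [].
solve_lin.
Qed.

#[local] Hint Resolve lin_rc lin_fp lin_dp lin_pr lin_mf lin_pr_g lin_mf_g : linDB.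
Local Notation face := (face F tp X Y hx md).
Local Notation degen := (degen F tp X Y hx).
Local Notation cyc := (cyc F tp X Y hx md).

Lemma face_E i n c : face i n c = if i == n.+1 then
    lift (fun (yh : T (tpow n) X) (x : Y) =>
      lift (fun (y : tpow n) (a : X) =>
        lift (fun a1 a2 => (tm (mf a1 n y) (act a2 x) : Camb F tp X Y n)) (D a)) yh) c
  else lift (fun (y : tpow n.+1) (x : Y) => (tm (fp i n y) x : Camb F tp X Y n)) c.
Proof. by rewrite /Defs.face; case: ifP. Qed.

Lemma degen_E i n c : degen i n c =
  lift (fun (y : tpow n) (x : Y) => (tm (dp i n y) x : Camb F tp X Y n.+1)) c.
Proof. by []. Qed.

Lemma cyc_0 c : cyc 0 c = lift (fun (a : X) (x : Y) =>
           lift (fun a1 a2 => (tm a1 (act a2 x) : Camb F tp X Y 0)) (D a)) c.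
Proof. by []. Qed.

Lemma cyc_S n c : cyc n.+1 c = lift (fun (yh : T (tpow n) X) (x : Y) =>
      lift (fun (y : tpow n) (a : X) =>
        lift (fun a1 a2 => (tm (pr a1 n y) (act a2 x) : Camb F tp X Y n.+1)) (D a)) yh) c.
Proof. by []. Qed.

Lemma lin_face i n : lin (face i n).
Proof. move=> a u v; rewrite !face_E; case: ifP => _; revert a u v; apply: lin_lift; solve_lin. Qed.

Lemma lin_degen i n : lin (degen i n).
Proof. move=> a u v; rewrite !degen_E; revert a u v; apply: lin_lift; solve_lin. Qed.

Lemma lin_cyc n : lin (cyc n).
Proof.
case: n => [|n] a u v.
  by rewrite !cyc_0; revert a u v; apply: lin_lift; solve_lin.
by rewrite !cyc_S; revert a u v; apply: lin_lift; solve_lin.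
Qed.

End Gen.
#[export] Hint Resolve lin_face lin_degen lin_cyc : linDB.
#[export] Hint Resolve lin_rc lin_fp lin_dp lin_pr lin_mf lin_pr_g lin_mf_g : linDB.
#[export] Hint Extern 1 (lin (rcoact _ _ _ _ ?n)) => refine (lin_rc _ _ _ _ n); solve [eauto with linDB] : linDB.

Section OmegaMap.
Context {F : fieldType} {tp : tensor_provider F}.
Variables (H K M N : lmodType F).
Local Notation T := (T F tp).
Local Notation tm := (tm F tp).
Local Notation lift := (Defs.lift F tp).
Local Notation tpow := (tpow F tp).
Local Notation op := (omega_pow F tp H K).
Local Notation oi := (omega_inv H K).
Local Notation Om := (Omega F tp H K M N).

Lemma Om_E n c : Om n c = lift (fun (x : tpow (T H K) n) (mn : T M N) =>
    lift (fun (a : tpow H n) (b : tpow K n) =>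
      lift (fun (y : M) (z : N) =>
        (tm (tm a y : Camb F tp H M n) (tm b z : Camb F tp K N n))) mn) (op n x)) c.
Proof. by []. Qed.

Lemma lin_Om n : lin (Om n).
Proof. move=> a u v; rewrite !Om_E; revert a u v; apply: lin_lift; solve_lin. Qed.

Definition Oi n (t : T (Camb F tp H M n) (Camb F tp K N n)) : Camb F tp (T H K) (T M N) n :=
  lift (fun (c : Camb F tp H M n) (d : Camb F tp K N n) =>
    lift (fun (a : tpow H n) (y : M) => lift (fun (b : tpow K n) (z : N) =>
      (tm (oi n (tm a b)) (tm y z) : Camb F tp (T H K) (T M N) n)) d) c) t.

Lemma lin_Oi n : lin (Oi n).
Proof. rewrite /Oi; apply: lin_lift; solve_lin. Qed.
#[local] Hint Resolve lin_Om lin_Oi : linDB.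

Lemma Oi_Om n c : Oi n (Om n c) = c.
Proof.
extv c; move=> x mn; extv mn; move=> y z.
rewrite -[in RHS](oi_op _ _ _ x) Om_E; lsimp.
move: (op n x) => w; extv w; move=> a b.
by rewrite /Oi; lsimp.
Qed.

Lemma Om_Oi n t : Om n (Oi n t) = t.
Proof.
extv t; move=> c d; extv c; move=> a y; extv d; move=> b z.
rewrite /Oi; lsimp.
by rewrite op_oi; lsimp.
Qed.

End OmegaMap.
#[export] Hint Resolve lin_Om lin_Oi : linDB.

#[global] Typeclasses Opaque Omega Defs.face Defs.degen Defs.cyc rcoact face_pow degen_pow prepend mulfront Oi.
Opaque Omega Defs.face Defs.degen Defs.cyc rcoact face_pow degen_pow prepend mulfront Oi.

Section Main.
Context {F : fieldType} {tp : tensor_provider F}.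
Variables (H K M N : lmodType F) (h : hopf_data F tp H) (k : hopf_data F tp K)
  (m : mod_data F tp H M) (n' : mod_data F tp K N).
Local Notation T := (T F tp).
Local Notation tm := (tm F tp).
Local Notation lift := (Defs.lift F tp).
Local Notation tpow := (tpow F tp).
Local Notation op := (omega_pow F tp H K).
Local Notation oi := (omega_inv H K).
Local Notation Om := (Omega F tp H K M N).
Local Notation HK := (hopf_tensor F tp H K h k).
Local Notation MN := (mod_tensor F tp H K M N m n').
Hypotheses (BmH : bilin (@hmul F tp H h)) (BmK : bilin (@hmul F tp K k))
  (LDH : lin (@hcomul F tp H h)) (LDK : lin (@hcomul F tp K k))
  (BaM : bilin (@mact F tp H M m)) (BaN : bilin (@mact F tp K N n'))
  (LcM : lin (@mcoact F tp H M m)) (LcN : lin (@mcoact F tp K N n')).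

Lemma BmHK : bilin (@hmul F tp _ HK).
Proof. rewrite /=; solve_lin. Qed.
Lemma LDHK : lin (@hcomul F tp _ HK).
Proof. rewrite /=; solve_lin. Qed.
Lemma BaMN : bilin (@mact F tp _ _ MN).
Proof. rewrite /=; solve_lin. Qed.
Lemma LcMN : lin (@mcoact F tp _ _ MN).
Proof. rewrite /=; solve_lin. Qed.
#[local] Hint Resolve BmHK LDHK BaMN LcMN : linDB.

Lemma mulHK_tm a b u v : @hmul F tp _ HK (tm a b) (tm u v) = tm (hmul F tp H h a u) (hmul F tp K k b v).
Proof. by rewrite /=; lsimp. Qed.
Lemma DHK_tm a b : @hcomul F tp _ HK (tm a b) =
  lift (fun a1 a2 => lift (fun b1 b2 => tm (tm a1 b1) (tm a2 b2)) (hcomul F tp K k b)) (hcomul F tp H h a).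
Proof. by rewrite /=; lsimp. Qed.
Lemma oneHK : @hone F tp _ HK = tm (hone F tp H h) (hone F tp K k).
Proof. by []. Qed.
Lemma actMN_tm a b x y : @mact F tp _ _ MN (tm a b) (tm x y) = tm (mact F tp H M m a x) (mact F tp K N n' b y).
Proof. by rewrite /=; lsimp. Qed.
Lemma coMN_tm x y : @mcoact F tp _ _ MN (tm x y) =
  lift (fun a x0 => lift (fun b y0 => tm (tm a b) (tm x0 y0)) (mcoact F tp K N n' y)) (mcoact F tp H M m x).
Proof. by rewrite /=; lsimp. Qed.


Lemma FP i n y : op n (face_pow F tp _ HK i n y) =
  tmap F tp (face_pow F tp H h i n) (face_pow F tp K k i n) (op n.+1 y).
Proof.
elim: n y => [|n IH] y.
  extv y; move=> p q; extv p; move=> a b; extv q; move=> u v.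
  rewrite fp_0 op_S !op_0; lsimp; rewrite op_0; lsimp.
  by rewrite !fp_0; lsimp.
rewrite fp_S; case: ifP => E.
  extv y; move=> y1 hk; extv y1; move=> z g; extv g; move=> g1 g2; extv hk; move=> u v.
  lsimp; rewrite ?mulHK_tm op_S; lsimp.
  rewrite op_S; lsimp; rewrite op_S; lsimp.
  move: (op n z) => w; extv w; move=> a b; lsimp.
  by rewrite !fp_S E /=; lsimp.
extv y; move=> y1 hk; extv hk; move=> u v.
lsimp; rewrite op_S; lsimp; rewrite IH.
rewrite [op n.+2 _]op_S; lsimp.
move: (op n.+1 y1) => w; extv w; move=> a b; lsimp.
by rewrite !fp_S E /=; lsimp.
Qed.

Lemma DP i n y : op n.+1 (degen_pow F tp _ HK i n y) =
  tmap F tp (degen_pow F tp H h i n) (degen_pow F tp K k i n) (op n y).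
Proof.
elim: n y => [|n IH] y.
  extv y; move=> a b.
  rewrite dp_0 oneHK op_S !op_0; lsimp; rewrite op_0; lsimp.
  by rewrite !dp_0; lsimp.
rewrite dp_S; case: ifP => E.
  rewrite oneHK op_S; lsimp.
  move: (op n.+1 y) => w; extv w; move=> a b; lsimp.
  by rewrite !dp_S E.
extv y; move=> y1 hk; extv hk; move=> u v.
lsimp; rewrite op_S; lsimp; rewrite IH.
rewrite [op n.+1 _]op_S; lsimp.
move: (op n y1) => w; extv w; move=> a b; lsimp.
by rewrite !dp_S E /=; lsimp.
Qed.

Lemma PP g1 g2 n y : op n.+1 (prepend F tp _ (tm g1 g2) n y) =
  tmap F tp (prepend F tp H g1 n) (prepend F tp K g2 n) (op n y).
Proof.
elim: n y => [|n IH] y.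
  extv y; move=> a b.
  rewrite pr_0 op_S !op_0; lsimp; rewrite op_0; lsimp.
  by rewrite !pr_0.
extv y; move=> y1 hk; extv hk; move=> u v.
rewrite pr_S; lsimp; rewrite op_S; lsimp; rewrite IH.
rewrite [op n.+1 _]op_S; lsimp.
move: (op n y1) => w; extv w; move=> a b; lsimp.
by rewrite !pr_S; lsimp.
Qed.

Lemma MF g1 g2 n y : op n (mulfront F tp _ HK (tm g1 g2) n y) =
  tmap F tp (mulfront F tp H h g1 n) (mulfront F tp K k g2 n) (op n y).
Proof.
elim: n y => [|n IH] y.
  extv y; move=> a b.
  rewrite mf_0 !op_0; lsimp; rewrite ?mulHK_tm.
  by rewrite !mf_0.
extv y; move=> y1 hk; extv hk; move=> u v.
rewrite mf_S; lsimp; rewrite op_S; lsimp; rewrite IH.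
rewrite [op n.+1 _]op_S; lsimp.
move: (op n y1) => w; extv w; move=> a b; lsimp.
by rewrite !mf_S; lsimp.
Qed.

#[local] Hint Resolve lin_face lin_degen lin_cyc lin_rc lin_fp lin_dp lin_pr lin_mf lin_pr_g lin_mf_g : linDB.

Lemma face_compat i n c :
  Om n (face F tp _ _ HK MN i n c) =
  tmap F tp (face F tp H M h m i n) (face F tp K N k n' i n) (Om n.+1 c).
Proof.
extv c; move=> y mn; extv y; move=> y1 hk; extv hk; move=> u v; extv mn; move=> x r.
case E: (i == n.+1).
  rewrite face_E E; lsimp; rewrite ?DHK_tm.
  rewrite [Om n.+1 _]Om_E; lsimp; rewrite op_S; lsimp.
  rewrite tmap_lift; try solve_lin.
  lflat; lsimp.
  setoid_rewrite face_E; setoid_rewrite E; simpl; lsimp.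
  move: (hcomul F tp H h u) => z1; extv z1; move=> u1 u2.
  move: (hcomul F tp K k v) => z2; extv z2; move=> v1 v2.
  lsimp; rewrite Om_E; lsimp; rewrite MF.
  move: (op n y1) => w; extv w; move=> a b; lsimp.
  done.
rewrite face_E E; lsimp; rewrite Om_E; lsimp; rewrite FP.
rewrite [Om n.+1 _]Om_E; lsimp.
move: (op n.+1 (tm y1 (tm u v))) => w; extv w; move=> a b; lsimp.
by rewrite !face_E E; lsimp.
Qed.

Lemma degen_compat i n c :
  Om n.+1 (degen F tp _ _ HK i n c) =
  tmap F tp (degen F tp H M h i n) (degen F tp K N k i n) (Om n c).
Proof.
extv c; move=> y mn; extv mn; move=> x r.
rewrite degen_E; lsimp; rewrite Om_E; lsimp; rewrite DP.
rewrite [Om n _]Om_E; lsimp.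
move: (op n y) => w; extv w; move=> a b; lsimp.
by rewrite !degen_E; lsimp.
Qed.

Lemma cyc_compat n c :
  Om n (cyc F tp _ _ HK MN n c) =
  tmap F tp (cyc F tp H M h m n) (cyc F tp K N k n' n) (Om n c).
Proof.
case: n c => [|n] c.
  extv c; move=> y mn; extv y; move=> a b; extv mn; move=> x r.
  rewrite cyc_0; lsimp; rewrite ?DHK_tm.
  rewrite [Om 0 (tm _ _)]Om_E; lsimp; rewrite op_0; lsimp.
  rewrite !cyc_0; lsimp.
  move: (hcomul F tp H h a) => z1; extv z1; move=> u1 u2.
  move: (hcomul F tp K k b) => z2; extv z2; move=> v1 v2.
  lsimp; rewrite Om_E; lsimp; rewrite ?op_0; lsimp.
  done.
extv c; move=> y mn; extv y; move=> y1 hk; extv hk; move=> u v; extv mn; move=> x r.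
rewrite cyc_S; lsimp; rewrite ?DHK_tm.
rewrite [Om n.+1 (tm _ _)]Om_E; lsimp; rewrite op_S; lsimp.
rewrite tmap_lift; try solve_lin.
lflat; lsimp.
setoid_rewrite cyc_S; lsimp.
move: (hcomul F tp H h u) => z1; extv z1; move=> u1 u2.
move: (hcomul F tp K k v) => z2; extv z2; move=> v1 v2.
lsimp; rewrite Om_E; lsimp; rewrite PP.
move: (op n y1) => w; extv w; move=> a b; lsimp.
done.
Qed.

End Main.

Section Gen2.
Context {F : fieldType} {tp : tensor_provider F}.
Variables (X Y : lmodType F) (hx : hopf_data F tp X) (md : mod_data F tp X Y).
Local Notation T := (T F tp).
Local Notation tm := (tm F tp).
Local Notation lift := (Defs.lift F tp).
Local Notation tpow := (tpow F tp X).
Local Notation mul := (@hmul F tp X hx).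
Local Notation D := (@hcomul F tp X hx).
Local Notation e := (@hcounit F tp X hx).
Local Notation co := (@mcoact F tp X Y md).
Local Notation rc := (rcoact F tp X hx).

Definition cL n (c : Camb F tp X Y n) : T (tpow n) (T X Y) :=
  tassoc F tp (tmap F tp (rc n) id c).
Definition cR n (c : Camb F tp X Y n) : T (tpow n) (T X Y) :=
  tmap F tp id co c.
Definition cP n (z : T (tpow n) (T X Y)) : Camb F tp X Y n :=
  lift (fun p am => lift (fun a x => (e a : F) *: (tm p x : Camb F tp X Y n)) am) z.

Hypotheses (Bm : bilin mul) (LD : lin D) (Le : lin e) (Lc : lin co)
  (cuD : forall a, lift (fun x y => (e y : F) *: x) (D a) = a)
  (em : forall a b, e (mul a b) = e a * e b)
  (cuM : forall x, lift (fun a y => (e a : F) *: y) (co x) = x).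
#[local] Hint Resolve lin_rc : linDB.

Lemma lin_cL n : lin (cL n).
Proof. rewrite /cL; solve_lin. Qed.
Lemma lin_cR n : lin (cR n).
Proof. rewrite /cR; solve_lin. Qed.
Lemma lin_cP n : lin (cP n).
Proof. rewrite /cP; solve_lin. Qed.

#[local] Hint Resolve lin_cL lin_cR lin_cP : linDB.
Lemma cL_tm n a x : cL n (tm a x) = lift (fun p a1 => tm p (tm a1 x)) (rc n a).
Proof. by rewrite /cL tassoc_E; lsimp. Qed.
Lemma cR_tm n a x : cR n (tm a x) = tm a (co x).
Proof. by rewrite /cR; lsimp. Qed.

Lemma rc_counit n x : lift (fun x0 x1 => (e x1 : F) *: x0) (rc n x) = x.
Proof.
elim: n x => [|n IH] x; first by rewrite rc_0.
extv x; move=> y a.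
rewrite rc_S; lsimp; lflat; lsimp.
rewrite -[in RHS](IH y) -[in RHS](cuD a).
move: (rc n y) => z1; extv z1; move=> y0 y1.
move: (D a) => z2; extv z2; move=> a1 a2.
by lsimp; rewrite em tmZl tmZr scalerA mulrC.
Qed.

Lemma cP_cL n c : cP n (cL n c) = c.
Proof.
have L : lin (fun c => cP n (cL n c)) by apply: lin_comp; [apply: lin_cP|apply: lin_cL].
apply: (lin_ext L lin_idf) => a x.
rewrite cL_tm -[in RHS](rc_counit n a).
move: (rc n a) => z; extv z; move=> p a1.
by rewrite /cP; lsimp; rewrite tmZl.
Qed.

Lemma cP_cR n c : cP n (cR n c) = c.
Proof.
have L : lin (fun c => cP n (cR n c)) by apply: lin_comp; [apply: lin_cP|apply: lin_cR].
apply: (lin_ext L lin_idf) => a x.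
rewrite cR_tm -[in RHS](cuM x).
move: (co x) => z; extv z; move=> a1 x1.
by rewrite /cP; lsimp; rewrite tmZr.
Qed.

End Gen2.
#[export] Hint Resolve lin_cL lin_cR lin_cP : linDB.

Section Main2.
Context {F : fieldType} {tp : tensor_provider F}.
Variables (H K M N : lmodType F) (h : hopf_data F tp H) (k : hopf_data F tp K)
  (m : mod_data F tp H M) (n' : mod_data F tp K N).
Local Notation T := (T F tp).
Local Notation tm := (tm F tp).
Local Notation lift := (Defs.lift F tp).
Local Notation tpow := (tpow F tp).
Local Notation op := (omega_pow F tp H K).
Local Notation oi := (omega_inv H K).
Local Notation Om := (Omega F tp H K M N).
Local Notation HK := (hopf_tensor F tp H K h k).
Local Notation MN := (mod_tensor F tp H K M N m n').
Hypotheses (BmH : bilin (@hmul F tp H h)) (BmK : bilin (@hmul F tp K k))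
  (LDH : lin (@hcomul F tp H h)) (LDK : lin (@hcomul F tp K k))
  (BaM : bilin (@mact F tp H M m)) (BaN : bilin (@mact F tp K N n'))
  (LcM : lin (@mcoact F tp H M m)) (LcN : lin (@mcoact F tp K N n')).
#[local] Hint Resolve BmHK LDHK BaMN LcMN : linDB.
#[local] Hint Resolve lin_face lin_degen lin_cyc lin_rc lin_fp lin_dp lin_pr lin_mf lin_pr_g lin_mf_g : linDB.
Local Notation rcH := (rcoact F tp H h).
Local Notation rcK := (rcoact F tp K k).
Local Notation rcHK := (rcoact F tp _ HK).

Lemma R1 n y : rcHK n y = lift (fun a b => lift (fun a0 a1 => lift (fun b0 b1 =>
   (tm (oi n (tm a0 b0)) (tm a1 b1) : T (tpow (T H K) n) (T H K))) (rcK n b)) (rcH n a)) (op n y).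
Proof.
elim: n y => [|n IH] y.
  extv y; move=> a b.
  rewrite rc_0 op_0; lsimp; rewrite !rc_0 ?DHK_tm.
  move: (hcomul F tp H h a) => z1; extv z1; move=> a1 a2.
  move: (hcomul F tp K k b) => z2; extv z2; move=> b1 b2.
  by lsimp; rewrite oi_0.
extv y; move=> y' hk; extv hk; move=> u v.
rewrite rc_S; lsimp; rewrite IH ?DHK_tm.
rewrite op_S; lsimp.
move: (op n y') => w; extv w; move=> a b; lsimp; lflat; lsimp.
rewrite !rc_S; lsimp.
move: (rcH n a) => z1; extv z1; move=> a0 b0.
move: (rcK n b) => z2; extv z2; move=> a1 b1.
move: (hcomul F tp H h u) => z3; extv z3; move=> a2 b2.
move: (hcomul F tp K k v) => z4; extv z4; move=> a3 b3.
by lsimp; rewrite oi_S; lsimp.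
Qed.

Definition Xi' n (z : T (tpow (T H K) n) (T (T H K) (T M N))) :
    T (T (tpow H n) (T H M)) (T (tpow K n) (T K N)) :=
  lift (fun (y : tpow (T H K) n) (zz : T (T H K) (T M N)) =>
   lift (fun (hk : T H K) (mr : T M N) =>
    lift (fun (a : H) (b : K) => lift (fun (x : M) (r : N) =>
      lift (fun (p : tpow H n) (q : tpow K n) =>
        (tm (tm p (tm a x)) (tm q (tm b r)) : T (T (tpow H n) (T H M)) (T (tpow K n) (T K N))))
        (op n y)) mr) hk) zz) z.

Definition Xi n (z : T (T (tpow H n) (T H M)) (T (tpow K n) (T K N))) :
    T (tpow (T H K) n) (T (T H K) (T M N)) :=
  lift (fun (P : T (tpow H n) (T H M)) (Q : T (tpow K n) (T K N)) =>
   lift (fun (p : tpow H n) (am : T H M) =>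
    lift (fun (q : tpow K n) (bn : T K N) =>
     lift (fun (a : H) (x : M) => lift (fun (b : K) (r : N) =>
      (tm (oi n (tm p q)) (tm (tm a b) (tm x r)) : T (tpow (T H K) n) (T (T H K) (T M N))))
      bn) am) Q) P) z.

Lemma lin_Xi' n : lin (Xi' n). Proof. rewrite /Xi'; solve_lin. Qed.
Lemma lin_Xi n : lin (Xi n). Proof. rewrite /Xi; solve_lin. Qed.
#[local] Hint Resolve lin_Xi lin_Xi' : linDB.

Lemma Xi_Xi' n z : Xi n (Xi' n z) = z.
Proof.
extv z; move=> y zz; extv zz; move=> hk mr; extv hk; move=> a b; extv mr; move=> x r.
rewrite -[in RHS](oi_op _ _ _ y) /Xi'; lsimp.
move: (op n y) => w; extv w; move=> p q.
by rewrite /Xi; lsimp.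
Qed.

Local Notation cLH := (cL H M h).
Local Notation cLK := (cL K N k).
Local Notation cLHK := (cL (T H K) (T M N) HK).
Local Notation cRH := (cR H M m).
Local Notation cRK := (cR K N n').
Local Notation cRHK := (cR (T H K) (T M N) MN).

Lemma C4a n c : tmap F tp (cLH n) (cLK n) (Om n c) = Xi' n (cLHK n c).
Proof.
extv c; move=> y mn; extv mn; move=> x r.
rewrite Om_E; lsimp.
rewrite tmap_lift; try solve_lin.
lsimp; setoid_rewrite cL_tm; try solve_lin.
rewrite R1.
move: (op n y) => w; extv w; move=> a b; lsimp.
move: (rcH n a) => z1; extv z1; move=> a0 a1.
move: (rcK n b) => z2; extv z2; move=> b0 b1.
by lsimp; rewrite /Xi'; lsimp; rewrite op_oi; lsimp.
Qed.

Lemma C4b n c : tmap F tp (cRH n) (cRK n) (Om n c) = Xi' n (cRHK n c).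
Proof.
extv c; move=> y mn; extv mn; move=> x r.
rewrite Om_E; lsimp.
rewrite tmap_lift; try solve_lin.
lsimp; rewrite ?coMN_tm.
move: (mcoact F tp H M m x) => z1; extv z1; move=> a1 x1.
move: (mcoact F tp K N n' r) => z2; extv z2; move=> b1 r1.
lsimp; rewrite /Xi'; lsimp.
move: (op n y) => w; extv w; move=> a b.
by lsimp.
Qed.

End Main2.

From mathcomp Require Import boolp classical_sets.
From Stdlib Require Import ClassicalEpsilon Classical_Prop.
Import GRing.Theory.
Local Open Scope ring_scope.

Section Sep.
Context {F : fieldType}.

Definition lincl {V : lmodType F} (A : V -> Prop) :=
  forall (a : F) u v, A u -> A v -> A (a *: u + v).

Lemma sep {V : lmodType F} (S : V -> Prop) (x : V) :
  S 0 -> lincl S -> ~ S x ->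
  exists phi : V -> F^o, lin phi /\ (forall s, S s -> phi s = 0) /\ phi x = 1.
Proof.
move=> S0 SL Sx.
pose P (A : set V) := (A = set0 \/ subset S A) /\ lincl A /\ ~ A x.
have [A [[PA1 [LA Ax]] Amax]] : exists A, P A /\ forall B, proper A B -> ~ P B.
  apply: Zorn_bigcup => Fam FP Ftot; split; [|split].
  - case: (classic (exists X, Fam X /\ subset S X)) => [[X [FX SX]]|NX].
      by right=> s Ss; exists X => //; apply: SX.
    left; rewrite predeqE => u; split => // -[X FX Xu].
    case: (FP X FX) => -[X0|SX] _; first by move: Xu; rewrite X0.
    by case: NX; exists X.
  - move=> a u v [X FX Xu] [Y FY Yv].
    case: (Ftot X Y FX FY) => XY.
      by exists Y => //; case: (FP Y FY) => _ [LY _]; apply: LY => //; apply: XY.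
    by exists X => //; case: (FP X FX) => _ [LX _]; apply: LX => //; apply: XY.
  - by move=> [X FX Xx]; case: (FP X FX) => _ [_]; apply.
have SA : subset S A.
  case: PA1 => // A0; exfalso; apply: (Amax S).
    split; first by rewrite A0.
    by move=> SA; move: (SA 0 S0); rewrite A0.
  by split; [right|split].
have A0 : A 0 by apply: SA.
have AN : forall u, A u -> A (- u).
  by move=> u Au; rewrite -[- u]addr0 -scaleN1r; apply: LA.
have AZ : forall (c : F) u, A u -> A (c *: u).
  by move=> c u Au; rewrite -[c *: u]addr0; apply: LA.
have AD : forall u v, A u -> A v -> A (u + v).
  by move=> u v Au Av; rewrite -[u]scale1r; apply: LA.
have uniq : forall y c c', A (y - c *: x) -> A (y - c' *: x) -> c = c'.
  move=> y c c' A1 A2; apply/eqP; apply/negPn/negP => ne.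
  have : A ((c' - c) *: x).
    have -> : (c' - c) *: x = (y - c *: x) + - (y - c' *: x).
      by rewrite scalerBl opprB [RHS]addrC addrA subrK.
    by apply: AD => //; apply: AN.
  move=> /(AZ (c' - c)^-1); rewrite scalerA mulVf ?subr_eq0 1?eq_sym // scale1r.
  exact: Ax.
have ex : forall y, exists c : F, A (y - c *: x).
  move=> y; case: (classic (A y)) => Ay.
    by exists 0; rewrite scale0r subr0.
  pose B (z : V) := exists (a : V) (c : F), A a /\ z = a + c *: y.
  have LB : lincl B.
    move=> a u v [a1 [c1 [A1 ->]]] [a2 [c2 [A2 ->]]].
    exists (a *: a1 + a2), (a * c1 + c2); split; first by apply: LA.
    by rewrite scalerDr scalerDl scalerA addrACA.
  have AB : subset A B by move=> u Au; exists u, 0; rewrite scale0r addr0.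
  have By : B y by exists 0, 1; rewrite scale1r add0r.
  have : ~ P B by apply: Amax; split=> // BA; apply: Ay; apply: BA.
  move=> NPB; case: (classic (B x)) => [[a [c [Aa xE]]]|NBx].
    have c0 : c != 0.
      by apply/eqP => c0; apply: Ax; rewrite xE c0 scale0r addr0.
    exists c^-1; have -> : y - c^-1 *: x = - (c^-1 *: a).
      by rewrite xE scalerDr scalerA mulVf // scale1r opprD addrCA subrr addr0.
    by apply: AN; apply: AZ.
  by exfalso; apply: NPB; split; [right=> s Ss; apply: AB; apply: SA|split].
pose phi (y : V) : F^o := proj1_sig (constructive_indefinite_description _ (ex y)).
have phiP : forall y, A (y - (phi y : F) *: x).
  by move=> y; rewrite /phi; case: constructive_indefinite_description.
exists phi; split; [|split].
- move=> a u v; apply: (uniq (a *: u + v)) => //.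
  have -> : a *: u + v - (a *: (phi u : F^o) + phi v : F^o) *: x =
     a *: (u - (phi u : F) *: x) + (v - (phi v : F) *: x).
    rewrite scalerDl scalerBr scalerA.
    change (a *: (phi u : F^o)) with (a * (phi u : F)).
    by rewrite opprD addrACA.
  by apply: LA.
- move=> s Ss; apply: (uniq s) => //; rewrite scale0r subr0; exact: SA.
- by apply: (uniq x) => //; rewrite scale1r subrr.
Qed.


Context {tp : tensor_provider F}.
Local Notation T := (T F tp).
Local Notation tm := (tm F tp).
Local Notation lift := (Defs.lift F tp).

Lemma lin_zero {V W : lmodType F} : lin (fun _ : V => (0 : W)).
Proof. by move=> a u v; rewrite scaler0 addr0. Qed.

Lemma span_tm {V W : lmodType F} (t : T V W) :
  exists s : seq (V * W), t = \sum_(p <- s) tm p.1 p.2.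
Proof.
pose S (t : T V W) := exists s : seq (V * W), t = \sum_(p <- s) tm p.1 p.2.
have S0 : S 0 by exists [::]; rewrite big_nil.
have SL : lincl S.
  move=> a u v [s1 ->] [s2 ->].
  exists ([seq (a *: p.1, p.2) | p <- s1] ++ s2).
  by rewrite big_cat big_map scaler_sumr /=; congr (_ + _); apply: eq_bigr => p _; rewrite tmZl.
case: (classic (S t)) => // NSt.
have [phi [Lphi [phi0 phit]]] := sep _ _ S0 SL NSt.
have : phi t = (fun _ => 0 : F^o) t.
  apply: (lin_ext Lphi lin_zero) => v w; apply: phi0.
  by exists [:: (v, w)]; rewrite big_seq1.
by rewrite phit => /eqP; rewrite oner_eq0.
Qed.

Definition inspan {X : Type} {W : lmodType F} (pi : X -> W) (l : seq X) (w : W) :=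
  exists cs : seq F, size cs = size l /\ w = \sum_(q <- zip cs l) q.1 *: pi q.2.

Lemma inspan0 {X : Type} {W : lmodType F} (pi : X -> W) l : inspan pi l 0.
Proof.
exists (nseq (size l) 0); rewrite size_nseq; split => //.
elim: l => [|x l IH] /=; first by rewrite big_nil.
by rewrite big_cons -IH scale0r add0r.
Qed.

Lemma inspanL {X : Type} {W : lmodType F} (pi : X -> W) l : lincl (inspan pi l).
Proof.
move=> a u v [cs [Hs ->]] [cs' [Hs' ->]].
exists [seq a * q.1 + q.2 | q <- zip cs cs']; split.
  by rewrite size_map size_zip Hs Hs' minnn.
elim: l cs cs' Hs Hs' => [|x l IH] [|c cs] [|c' cs'] //=.
  by rewrite !big_nil scaler0 addr0.
move=> [Hs] [Hs']; rewrite !big_cons -IH // scalerDr scalerA scalerDl.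
by rewrite addrACA.
Qed.

Lemma inspan_mem {X : eqType} {W : lmodType F} (pi : X -> W) l q :
  q \in l -> inspan pi l (pi q).
Proof.
elim: l => [|x l IH] //; rewrite in_cons => /orP[/eqP ->|ql].
  exists (1 :: nseq (size l) 0); rewrite /= size_nseq; split => //.
  rewrite big_cons scale1r; suff -> : \sum_(q0 <- zip (nseq (size l) 0) l) q0.1 *: pi q0.2 = 0 by rewrite addr0.
  by elim: l {IH} => [|y l IH]; rewrite ?big_nil //= big_cons IH scale0r addr0.
have [cs [Hs E]] := IH ql.
by exists (0 :: cs); rewrite /= Hs; split => //; rewrite big_cons scale0r add0r.
Qed.

Lemma sum_zip2 {X : Type} {U : zmodType} (cs : seq F) (r : seq X) (G : X -> U) :
  size cs = size r -> \sum_(q <- r) G q = \sum_(q <- zip cs r) G q.2.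
Proof.
move=> Hs; have E : r = unzip2 (zip cs r) by rewrite unzip2_zip // Hs.
by rewrite {1}E big_map.
Qed.

Lemma flat {V W V' W' : lmodType F} (f1 f2 : V -> V') (g1 g2 : W -> W') (t : T V W) :
  lin f1 -> lin f2 -> lin g1 -> lin g2 ->
  tmap F tp f1 id t = tmap F tp f2 id t -> tmap F tp id g1 t = tmap F tp id g2 t ->
  exists s : seq (V * W), (forall p, p \in s -> f1 p.1 = f2 p.1 /\ g1 p.2 = g2 p.2) /\
    t = \sum_(p <- s) tm p.1 p.2.
Proof.
move=> L1 L2 L3 L4 E1 E2.
have [s0 E0] := span_tm t.
suff: forall n (s : seq (V * W)), (size s <= n)%N -> t = \sum_(p <- s) tm p.1 p.2 ->
  exists s : seq (V * W), (forall p, p \in s -> f1 p.1 = f2 p.1 /\ g1 p.2 = g2 p.2) /\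
    t = \sum_(p <- s) tm p.1 p.2.
  by move/(_ _ s0 (leqnn _) E0).
elim=> [|n IH] s Hs Et.
  by case: s Hs Et => // _ Et; exists [::].
case: (classic (exists2 p, p \in s & inspan snd (rem p s) p.2)) => [[p ps [cs [Hcs Ep]]]|N2].
  apply: (IH [seq (q.2.1 + q.1 *: p.1, q.2.2) | q <- zip cs (rem p s)]).
    by rewrite size_map size_zip Hcs minnn size_rem //; case: (size s) Hs.
  rewrite Et (perm_big _ (perm_to_rem ps)) big_cons /= Ep big_map tm_sumr.
  rewrite (sum_zip2 _ _ (fun q => tm q.1 q.2) Hcs).
  rewrite -big_split /=; apply: eq_bigr => q _.
  by rewrite tmDl tmZr tmZl addrC.
case: (classic (exists2 p, p \in s & inspan fst (rem p s) p.1)) => [[p ps [cs [Hcs Ep]]]|N1].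
  apply: (IH [seq (q.2.1, q.2.2 + q.1 *: p.2) | q <- zip cs (rem p s)]).
    by rewrite size_map size_zip Hcs minnn size_rem //; case: (size s) Hs.
  rewrite Et (perm_big _ (perm_to_rem ps)) big_cons /= Ep big_map tm_suml.
  rewrite (sum_zip2 _ _ (fun q => tm q.1 q.2) Hcs).
  rewrite -big_split /=; apply: eq_bigr => q _.
  by rewrite tmDr tmZr tmZl addrC.
exists s; split => // p ps; split.
  have ns : ~ inspan snd (rem p s) p.2 by move=> H; apply: N2; exists p.
  have [psi [Lpsi [psi0 psi1]]] := sep _ _ (inspan0 snd _) (inspanL snd _) ns.
  have Bpsi : bilin (fun (v' : V') (w : W) => (psi w : F) *: v').
    split=> x; solve_lin.
  have key : forall f : V -> V', lin f ->
      lift (fun (v' : V') (w : W) => (psi w : F) *: v') (tmap F tp f id t) = f p.1.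
    move=> f Lf; rewrite Et (perm_big _ (perm_to_rem ps)) big_cons.
    rewrite (linD (lin_tmap Lf lin_idf)) (lin_sum _ _ _ (lin_tmap Lf lin_idf)).
    rewrite (linD (lin_lift _ Bpsi)) (lin_sum _ _ _ (lin_lift _ Bpsi)).
    rewrite tmap_tm; try solve_lin; rewrite lift_tm; try solve_lin.
    rewrite psi1 scale1r big1_seq ?addr0 // => q /andP[_ qr].
    rewrite tmap_tm; try solve_lin; rewrite lift_tm; try solve_lin.
    by rewrite psi0 ?scale0r //; apply: inspan_mem.
  by rewrite -(key f1) // -(key f2) // E1.
have ns : ~ inspan fst (rem p s) p.1 by move=> H; apply: N1; exists p.
have [psi [Lpsi [psi0 psi1]]] := sep _ _ (inspan0 fst _) (inspanL fst _) ns.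
have Bpsi : bilin (fun (v : V) (w' : W') => (psi v : F) *: w').
  split=> x; solve_lin.
have key : forall g : W -> W', lin g ->
    lift (fun (v : V) (w' : W') => (psi v : F) *: w') (tmap F tp id g t) = g p.2.
  move=> g Lg; rewrite Et (perm_big _ (perm_to_rem ps)) big_cons.
  rewrite (linD (lin_tmap lin_idf Lg)) (lin_sum _ _ _ (lin_tmap lin_idf Lg)).
  rewrite (linD (lin_lift _ Bpsi)) (lin_sum _ _ _ (lin_lift _ Bpsi)).
  rewrite tmap_tm; try solve_lin; rewrite lift_tm; try solve_lin.
  rewrite psi1 scale1r big1_seq ?addr0 // => q /andP[_ qr].
  rewrite tmap_tm; try solve_lin; rewrite lift_tm; try solve_lin.
  by rewrite psi0 ?scale0r //; apply: inspan_mem.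
by rewrite -(key g1) // -(key g2) // E2.
Qed.

Lemma tmap_canr {V W V' W' : lmodType F} (f : V -> V') (g : W -> W') (p : W' -> W) t :
  lin f -> lin g -> lin p -> (forall y, p (g y) = y) ->
  tmap F tp id p (tmap F tp f g t) = tmap F tp f id t.
Proof.
move=> Lf Lg Lp E; apply: (lin_ext (g1 := fun t => tmap F tp id p (tmap F tp f g t))).
- by apply: lin_comp; apply: lin_tmap => //; exact: lin_idf.
- by apply: lin_tmap => //; exact: lin_idf.
move=> v w; rewrite !tmap_tm //; try exact: lin_idf.
by rewrite E.
Qed.

Lemma tmap_canl {V W V' W' : lmodType F} (f : V -> V') (g : W -> W') (p : V' -> V) t :
  lin f -> lin g -> lin p -> (forall y, p (f y) = y) ->
  tmap F tp p id (tmap F tp f g t) = tmap F tp id g t.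
Proof.
move=> Lf Lg Lp E; apply: (lin_ext (g1 := fun t => tmap F tp p id (tmap F tp f g t))).
- by apply: lin_comp; apply: lin_tmap => //; exact: lin_idf.
- by apply: lin_tmap => //; exact: lin_idf.
move=> v w; rewrite !tmap_tm //; try exact: lin_idf.
by rewrite E.
Qed.

End Sep.

Theorem lemma7p1 (F : fieldType) (charF0 : [pchar F] =i pred0)
  (tp : tensor_provider F)
  (H K M N : lmodType F)
  (h : hopf_data F tp H) (k : hopf_data F tp K)
  (m : mod_data F tp H M) (n' : mod_data F tp K N)
  (hH : is_hopf F tp H h) (hK : is_hopf F tp K k)
  (hM : is_sayd F tp H M h m) (hN : is_sayd F tp K N k n') :
  let HK := hopf_tensor F tp H K h k in
  let MN := mod_tensor F tp H K M N m n' in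
  forall n : nat,
    lin (Omega F tp H K M N n) /\
    (forall c, cotensor F tp (T F tp H K) (T F tp M N) HK MN n c ->
       in_diag F tp H K M N h k m n' n (Omega F tp H K M N n c)) /\
    (forall c c', cotensor F tp (T F tp H K) (T F tp M N) HK MN n c ->
       cotensor F tp (T F tp H K) (T F tp M N) HK MN n c' ->
       Omega F tp H K M N n c = Omega F tp H K M N n c' -> c = c') /\
    (forall t, in_diag F tp H K M N h k m n' n t ->
       exists c, cotensor F tp (T F tp H K) (T F tp M N) HK MN n c /\
                 Omega F tp H K M N n c = t) /\
    (forall i, (i <= n.+1)%N ->
       forall c, cotensor F tp (T F tp H K) (T F tp M N) HK MN n.+1 c ->
       Omega F tp H K M N n (face F tp (T F tp H K) (T F tp M N) HK MN i n c) =
       tmap F tp (face F tp H M h m i n) (face F tp K N k n' i n)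
         (Omega F tp H K M N n.+1 c)) /\
    (forall i, (i <= n)%N ->
       forall c, cotensor F tp (T F tp H K) (T F tp M N) HK MN n c ->
       Omega F tp H K M N n.+1 (degen F tp (T F tp H K) (T F tp M N) HK i n c) =
       tmap F tp (degen F tp H M h i n) (degen F tp K N k i n)
         (Omega F tp H K M N n c)) /\
    (forall c, cotensor F tp (T F tp H K) (T F tp M N) HK MN n c ->
       Omega F tp H K M N n (cyc F tp (T F tp H K) (T F tp M N) HK MN n c) =
       tmap F tp (cyc F tp H M h m n) (cyc F tp K N k n' n)
         (Omega F tp H K M N n c)).
Proof.
move=> HK MN n; rewrite /HK /MN {HK MN}.
move: hH; rewrite /is_hopf /= => -[BmH [_ [_ [LDH [LeH [_ [cuH [_ [_ [emH _]]]]]]]]]].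
move: hK; rewrite /is_hopf /= => -[BmK [_ [_ [LDK [LeK [_ [cuK [_ [_ [emK _]]]]]]]]]].
move: hM; rewrite /is_sayd /= => -[BaM [_ [_ [LcM [_ [cuM _]]]]]].
move: hN; rewrite /is_sayd /= => -[BaN [_ [_ [LcN [_ [cuN _]]]]]].
have cuH2 : forall a, Defs.lift F tp (fun x y => (hcounit F tp H h y : F) *: x) (hcomul F tp H h a) = a.
  by move=> a; case: (cuH a).
have cuK2 : forall a, Defs.lift F tp (fun x y => (hcounit F tp K k y : F) *: x) (hcomul F tp K k a) = a.
  by move=> a; case: (cuK a).
split; first exact: lin_Om.
split.
  move=> c Hc.
  have Hc' : cL _ _ (hopf_tensor F tp H K h k) n c = cR _ _ (mod_tensor F tp H K M N m n') n c := Hc.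
  have E : tmap F tp (cL H M h n) (cL K N k n) (Omega F tp H K M N n c) =
           tmap F tp (cR H M m n) (cR K N n' n) (Omega F tp H K M N n c).
    by rewrite C4a // C4b // Hc'.
  have EH : tmap F tp (cL H M h n) id (Omega F tp H K M N n c) =
            tmap F tp (cR H M m n) id (Omega F tp H K M N n c).
    have := congr1 (tmap F tp id (cP K N k n)) E.
    rewrite !tmap_canr //; try solve_lin.
      by move=> y; apply: cP_cR.
    by move=> y; apply: cP_cL.
  have EK : tmap F tp id (cL K N k n) (Omega F tp H K M N n c) =
            tmap F tp id (cR K N n' n) (Omega F tp H K M N n c).
    have := congr1 (tmap F tp (cP H M h n) id) E.
    rewrite !tmap_canl //; try solve_lin.
      by move=> y; apply: cP_cR.
    by move=> y; apply: cP_cL.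
  have [s [Hs Es]] := flat _ _ _ _ _ (lin_cL _ _ _ BmH LDH n) (lin_cR _ _ _ LcM n)
     (lin_cL _ _ _ BmK LDK n) (lin_cR _ _ _ LcN n) EH EK.
  by exists s.
split.
  by move=> c c' _ _ E; rewrite -(Oi_Om _ _ _ _ n c) E Oi_Om.
split.
  move=> t [s [Hs Et]]; exists (Oi H K M N n t); split; last exact: Om_Oi.
  change (cL _ _ (hopf_tensor F tp H K h k) n (Oi H K M N n t) =
          cR _ _ (mod_tensor F tp H K M N m n') n (Oi H K M N n t)).
  rewrite -[LHS]Xi_Xi' -[RHS]Xi_Xi' -C4a // -C4b // Om_Oi; congr (Xi _ _ _ _ n _).
  rewrite Et (lin_sum _ _ _ (lin_tmap (lin_cL _ _ _ BmH LDH n) (lin_cL _ _ _ BmK LDK n))).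
  rewrite (lin_sum _ _ _ (lin_tmap (lin_cR _ _ _ LcM n) (lin_cR _ _ _ LcN n))).
  apply: eq_big_seq => p ps; rewrite !tmap_tm; try solve_lin.
  have E1 : cL H M h n p.1 = cR H M m n p.1 := (Hs p ps).1.
  have E2 : cL K N k n p.2 = cR K N n' n p.2 := (Hs p ps).2.
  by rewrite E1 E2.
split.
  by move=> i _ c _; apply: face_compat.
split.
  by move=> i _ c _; apply: degen_compat.
by move=> c _; apply: cyc_compat.
Qed.
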